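(* For every small category $\mathcal C$ and every functor $\mathcal G:\mathcal C\to\mathbf{Grp}$ there is an isomorphism $\pi_1(\mathrm{hocolim}^{\mathcal C}B\mathcal G)\cong\mathrm{colim}^{\mathcal C}\mathcal G$. In particular, $\mathrm{hocolim}^{\mathcal C}B\mathcal G$ is simply connected if and only if $\mathrm{colim}^{\mathcal C}\mathcal G$ is the trivial group.
   Context: $\mathrm{colim}^{\mathcal C}\mathcal G$ is the ordinary colimit in the category of groups. $B\mathcal G$ is the diagram $c\mapsto B(\mathcal G(c))$ of nerves of groups (pointed simplicial sets with one vertex). For a diagram $F:\mathcal C\to\mathbf{sSet}_*$, $\mathrm{hocolim}^{\mathcal C}F$ is the Bousfield–Kan pointed homotopy colimit, realized as the pointed simplicial set with $n$-simplices $\bigvee_{c_0\to\cdots\to c_n}F(c_0)_n$ (diagonal of the simplicial replacement). *)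

(* Defs.v *)
From Stdlib Require Import List Bool Relations ClassicalEpsilon.
Import ListNotations.


Record Cat := {
  Ob : Type;
  Hom : Ob -> Ob -> Type;
  idm : forall a, Hom a a;
  comp : forall a b c, Hom b c -> Hom a b -> Hom a c;
  comp_id_l : forall a b (f : Hom a b), comp a b b (idm b) f = f;
  comp_id_r : forall a b (f : Hom a b), comp a a b f (idm a) = f;
  comp_assoc : forall a b c d (h : Hom c d) (g : Hom b c) (f : Hom a b),
      comp a b d (comp b c d h g) f = comp a c d h (comp a b c g f)
}.
Arguments comp {_ _ _ _} _ _.
Arguments idm {_} _.

Record Grp := {
  gcar :> Type;
  gmul : gcar -> gcar -> gcar;
  gone : gcar;
  ginv : gcar -> gcar;
  gmul_assoc : forall x y z, gmul x (gmul y z) = gmul (gmul x y) z;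
  gmul_1l : forall x, gmul gone x = x;
  gmul_1r : forall x, gmul x gone = x;
  gmul_Vl : forall x, gmul (ginv x) x = gone;
  gmul_Vr : forall x, gmul x (ginv x) = gone
}.
Arguments gmul {_} _ _.
Arguments gone {_}.
Arguments ginv {_} _.

Definition is_hom {G H : Grp} (f : G -> H) : Prop :=
  forall x y, f (gmul x y) = gmul (f x) (f y).

Record GrpFunctor (C : Cat) := {
  fobj : Ob C -> Grp;
  fmap : forall a b, Hom C a b -> fobj a -> fobj b;
  fmap_hom : forall a b (f : Hom C a b), is_hom (fmap a b f);
  fmap_id : forall a x, fmap a a (idm a) x = x;
  fmap_comp : forall a b c (g : Hom C b c) (f : Hom C a b) x,
      fmap a c (comp g f) x = fmap b c g (fmap a b f x)
}.
Arguments fobj {_} _ _.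
Arguments fmap {_} _ {_ _} _ _.

Definition is_cocone {C : Cat} (F : GrpFunctor C) {L : Grp}
  (iota : forall c, fobj F c -> L) : Prop :=
  (forall c, is_hom (iota c)) /\
  (forall a b (f : Hom C a b) x, iota b (fmap F f x) = iota a x).

Definition is_colimit {C : Cat} (F : GrpFunctor C) {L : Grp}
  (iota : forall c, fobj F c -> L) : Prop :=
  is_cocone F iota /\
  forall (H : Grp) (kappa : forall c, fobj F c -> H),
    is_cocone F kappa ->
    exists u : L -> H, is_hom u /\ (forall c x, u (iota c x) = kappa c x) /\
      forall v : L -> H, is_hom v -> (forall c x, v (iota c x) = kappa c x) ->
        forall y, v y = u y.

(* Nerve B G of a group: B(G)_n = G^n, one vertex.                     *)
Fixpoint ntup (G : Grp) (n : nat) : Type :=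
  match n with 0 => unit | S n => (gcar G * ntup G n)%type end.

Fixpoint bone (G : Grp) (n : nat) : ntup G n :=
  match n with 0 => tt | S n => (gone, bone G n) end.

Definition bface0 {G : Grp} {n : nat} (x : ntup G (S n)) : ntup G n := snd x.

(* d_{i+1}: multiplies entries i+1, i+2 (1-based), or drops the last one *)
Fixpoint bfaceS (G : Grp) (i n : nat) : ntup G (S n) -> ntup G n :=
  match n return ntup G (S n) -> ntup G n with
  | 0 => fun _ => tt
  | S n' => fun x =>
      match i with
      | 0 => (gmul (fst x) (fst (snd x)), snd (snd x))
      | S i' => (fst x, bfaceS G i' n' (snd x))
      end
  end.

Arguments bfaceS {G} i n _.
Definition bface {G : Grp} (i n : nat) (x : ntup G (S n)) : ntup G n :=
  match i with 0 => bface0 x | S i' => bfaceS i' n x end.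

Fixpoint bdeg (G : Grp) (i n : nat) : ntup G n -> ntup G (S n) :=
  match i with
  | 0 => fun x => (gone, x)
  | S i' =>
      match n return ntup G n -> ntup G (S n) with
      | 0 => fun x => (gone, x)
      | S n' => fun x => (fst x, bdeg G i' n' (snd x))
      end
  end.

Arguments bdeg {G} i n _.
Fixpoint bmap (G H : Grp) (h : G -> H) (n : nat) : ntup G n -> ntup H n :=
  match n return ntup G n -> ntup H n with
  | 0 => fun _ => tt
  | S n' => fun x => (h (fst x), bmap G H h n' (snd x))
  end.

Arguments bmap {G H} h n _.
Arguments bone {G} n.
(* Chains c = c0 -> c1 -> ... -> cn in C                               *)
Fixpoint chain (C : Cat) (c : Ob C) (n : nat) : Type :=
  match n with
  | 0 => unit
  | S n => {c' : Ob C & (Hom C c c' * chain C c' n)%type}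
  end.
Arguments chain {C} c n.

(* d_{i+1} on chains: deletes c_{i+1} (composing, or dropping the last) *)
Fixpoint cfaceS (C : Cat) (i n : nat) (c : Ob C) : chain c (S n) -> chain c n :=
  match n return chain c (S n) -> chain c n with
  | 0 => fun _ => tt
  | S n' => fun ch =>
      match ch with
      | existT _ c1 (f, rest) =>
          match i with
          | 0 => match rest with
                 | existT _ c2 (g, rest') => existT _ c2 (comp g f, rest')
                 end
          | S i' => existT _ c1 (f, cfaceS C i' n' c1 rest)
          end
      end
  end.

Arguments cfaceS {C} i n c _.
Fixpoint cdeg (C : Cat) (i n : nat) (c : Ob C) : chain c n -> chain c (S n) :=
  match i with
  | 0 => fun ch => existT _ c (idm c, ch)
  | S i' =>
      match n return chain c n -> chain c (S n) with
      | 0 => fun ch => existT _ c (idm c, ch)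
      | S n' => fun ch =>
          match ch with
          | existT _ c1 (f, rest) => existT _ c1 (f, cdeg C i' n' c1 rest)
          end
      end
  end.

Arguments cdeg {C} i n c _.
(* hocolim^C B G : n-simplices  \/_{c0 -> ... -> cn} (B G(c0))_n ,
   the wedge being represented as the base point [None] together with
   the non-base simplices of each wedge summand.                       *)
Section Hocolim.
Variables (C : Cat) (F : GrpFunctor C).

Definition hsimp (n : nat) : Type :=
  option {c : Ob C & (chain c n * {x : ntup (fobj F c) n | x <> bone n})%type}.

Definition hmk (n : nat) (c : Ob C) (ch : chain c n) (x : ntup (fobj F c) n)
  : hsimp n :=
  match excluded_middle_informative (x = bone n) with
  | left _ => None
  | right nx => Some (existT _ c (ch, exist _ x nx))
  end.

Definition hface (n : nat) (i : nat) (s : hsimp (S n)) : hsimp n :=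
  match s with
  | None => None
  | Some (existT _ c (ch, exist _ x _)) =>
      match i with
      | 0 => match ch with
             | existT _ c1 (f, rest) =>
                 hmk n c1 rest (bmap (fmap F f) n (bface0 x))
             end
      | S i' => hmk n c (cfaceS i' n c ch) (bfaceS i' n x)
      end
  end.

Definition hdeg (n : nat) (i : nat) (s : hsimp n) : hsimp (S n) :=
  match s with
  | None => None
  | Some (existT _ c (ch, exist _ x _)) => hmk (S n) c (cdeg i n c ch) (bdeg i n x)
  end.

Definition hbase : hsimp 0 := None.
End Hocolim.

(* Fundamental group of a simplicial set (X, d, s) at a vertex v, as the
   edge-path group: edge loops at v modulo the equivalence generated by
   cancelling e e^{-1}, deleting degenerate edges s_0 w, and replacing
   (d_2 sigma)(d_0 sigma) by d_1 sigma for 2-simplices sigma.            *)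
Section EdgePath.
Variables (X : nat -> Type)
          (d : forall n, nat -> X (S n) -> X n)
          (s : forall n, nat -> X n -> X (S n)).

Definition step := (X 1 * bool)%type.  (* true = forward *)
Definition ssrc (e : step) : X 0 := if snd e then d 0 1 (fst e) else d 0 0 (fst e).
Definition stgt (e : step) : X 0 := if snd e then d 0 0 (fst e) else d 0 1 (fst e).

Fixpoint is_path (v w : X 0) (p : list step) : Prop :=
  match p with
  | [] => v = w
  | e :: q => ssrc e = v /\ is_path (stgt e) w q
  end.

Inductive elem_move : list step -> list step -> Prop :=
| em_cancel (e : X 1) (b : bool) (p q : list step) :
    elem_move (p ++ (e, b) :: (e, negb b) :: q) (p ++ q)
| em_degen (w : X 0) (b : bool) (p q : list step) :
    elem_move (p ++ (s 0 0 w, b) :: q) (p ++ q)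
| em_tri (sg : X 2) (p q : list step) :
    elem_move (p ++ (d 1 2 sg, true) :: (d 1 0 sg, true) :: q)
              (p ++ (d 1 1 sg, true) :: q).

Definition loop_move (v : X 0) (p q : list step) : Prop :=
  is_path v v p /\ is_path v v q /\ elem_move p q.

Definition loop_equiv (v : X 0) : list step -> list step -> Prop :=
  clos_refl_sym_trans _ (loop_move v).

(* phi : edge loops at v -> L induces a group isomorphism pi_1(X, v) ~= L
   (group law on loops = concatenation) *)
Definition pi1_iso (v : X 0) (L : Grp) (phi : list step -> L) : Prop :=
  (forall p q, is_path v v p -> is_path v v q ->
     (loop_equiv v p q <-> phi p = phi q)) /\
  (forall p q, is_path v v p -> is_path v v q -> phi (p ++ q) = gmul (phi p) (phi q)) /\
  (forall y : L, exists p, is_path v v p /\ phi p = y).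

Definition simply_connected (v : X 0) : Prop :=
  (forall w : X 0, exists p, is_path v w p) /\
  (forall p, is_path v v p -> loop_equiv v p []).
End EdgePath.

(* Main.v *)
Require Import Defs.
From Stdlib Require Import List Bool Relations ClassicalEpsilon FunctionalExtensionality PropExtensionality ProofIrrelevance.
Import ListNotations.

Lemma gmul_cancel_l (G : Grp) (a x y : G) : gmul a x = gmul a y -> x = y.
Proof.
  intros H. rewrite <- (gmul_1l G x), <- (gmul_1l G y), <- (gmul_Vl G a),
    <- !gmul_assoc, H; reflexivity.
Qed.

Lemma inv_unique (G : Grp) (a b : G) : gmul a b = gone -> b = ginv a.
Proof. intros H; apply (gmul_cancel_l G a); rewrite H, gmul_Vr; reflexivity. Qed.

Lemma idem_one (G : Grp) (a : G) : gmul a a = a -> a = gone.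
Proof. intros H; apply (gmul_cancel_l G a); rewrite H, gmul_1r; reflexivity. Qed.

Lemma ginv_one (G : Grp) : ginv (@gone G) = gone.
Proof. symmetry; apply inv_unique, gmul_1l. Qed.

Lemma hom_one {G H : Grp} (f : G -> H) : is_hom f -> f gone = gone.
Proof. intro Hf; apply idem_one; rewrite <- Hf, gmul_1l; reflexivity. Qed.

Lemma hom_inv {G H : Grp} (f : G -> H) : is_hom f -> forall x, f (ginv x) = ginv (f x).
Proof. intros Hf x; apply inv_unique; rewrite <- Hf, gmul_Vr; apply hom_one; auto. Qed.

Section Quot.
Variable A : Type.
Variable R : list A -> list A -> Prop.
Hypothesis Rrefl : forall p, R p p.
Hypothesis Rsym : forall p q, R p q -> R q p.
Hypothesis Rtrans : forall p q r, R p q -> R q r -> R p r.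
Hypothesis Rcong : forall a p q b, R p q -> R (a ++ p ++ b) (a ++ q ++ b).
Variable linv : list A -> list A.
Hypothesis Rinv_r : forall p, R (p ++ linv p) [].
Hypothesis Rinv_l : forall p, R (linv p ++ p) [].

Definition Qt := {P : list A -> Prop | exists p, P = R p}.
Definition qc (p : list A) : Qt := exist _ (R p) (ex_intro _ p eq_refl).

Lemma qc_eq p q : qc p = qc q <-> R p q.
Proof.
  split.
  - intro H. assert (E : R p = R q) by exact (f_equal (@proj1_sig _ _) H).
    rewrite E. apply Rrefl.
  - intro H. unfold qc. apply subset_eq_compat.
    extensionality x. apply propositional_extensionality; split; eauto.
Qed.

Definition rep (a : Qt) : list A :=
  proj1_sig (constructive_indefinite_description _ (proj2_sig a)).

Lemma rep_spec a : qc (rep a) = a.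
Proof.
  destruct a as [P HP]. unfold rep; simpl.
  destruct (constructive_indefinite_description _ HP) as [p Hp]; simpl.
  subst P. apply subset_eq_compat; reflexivity.
Qed.

Lemma qc_rep p : R (rep (qc p)) p.
Proof. apply qc_eq; apply rep_spec. Qed.

Lemma Rcongl p q b : R p q -> R (p ++ b) (q ++ b).
Proof. intro H; exact (Rcong [] p q b H). Qed.
Lemma Rcongr a p q : R p q -> R (a ++ p) (a ++ q).
Proof. intro H; pose proof (Rcong a p q [] H) as H'; rewrite !app_nil_r in H'; exact H'. Qed.

Definition qmul (a b : Qt) : Qt := qc (rep a ++ rep b).
Definition qone : Qt := qc [].
Definition qinv (a : Qt) : Qt := qc (linv (rep a)).

Lemma qmul_qc p q : qmul (qc p) (qc q) = qc (p ++ q).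
Proof.
  apply qc_eq. apply Rtrans with (p ++ rep (qc q)).
  - apply Rcongl, qc_rep.
  - apply Rcongr, qc_rep.
Qed.

Lemma qind a : exists p, a = qc p.
Proof. exists (rep a); symmetry; apply rep_spec. Qed.

Lemma q_assoc x y z : qmul x (qmul y z) = qmul (qmul x y) z.
Proof.
  destruct (qind x) as [p ->], (qind y) as [q ->], (qind z) as [r ->].
  rewrite !qmul_qc, app_assoc; reflexivity.
Qed.
Lemma q_1l x : qmul qone x = x.
Proof. destruct (qind x) as [p ->]. unfold qone; rewrite qmul_qc; reflexivity. Qed.
Lemma q_1r x : qmul x qone = x.
Proof. destruct (qind x) as [p ->]. unfold qone; rewrite qmul_qc, app_nil_r; reflexivity. Qed.
Lemma q_Vl x : qmul (qinv x) x = qone.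
Proof.
  unfold qinv. pose proof (rep_spec x) as E. set (r := rep x) in *. clearbody r.
  rewrite <- E, qmul_qc. apply qc_eq, Rinv_l.
Qed.
Lemma q_Vr x : qmul x (qinv x) = qone.
Proof.
  unfold qinv. pose proof (rep_spec x) as E. set (r := rep x) in *. clearbody r.
  rewrite <- E, qmul_qc. apply qc_eq, Rinv_r.
Qed.

Definition QG : Grp := Build_Grp Qt qmul qone qinv q_assoc q_1l q_1r q_Vl q_Vr.

Lemma QG_mul p q : @gmul QG (qc p) (qc q) = qc (p ++ q).
Proof. apply qmul_qc. Qed.
End Quot.

Section Main.
Variables (C : Cat) (F : GrpFunctor C) (L : Grp) (iota : forall c, fobj F c -> L).
Hypothesis Hcol : is_colimit F iota.

Notation X := (hsimp C F).
Notation dd := (hface C F).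
Notation ss := (hdeg C F).
Definition EQ := loop_equiv X dd ss (hbase C F).

Lemma vert_None (v : X 0) : v = None.
Proof.
  destruct v as [[c [ch [x nx]]]|]; [|reflexivity].
  destruct x; exfalso; apply nx; reflexivity.
Qed.

Lemma path_all p : forall v w, is_path X dd v w p.
Proof.
  induction p as [|e p IH]; intros v w; simpl.
  - rewrite (vert_None v), (vert_None w); reflexivity.
  - split; [rewrite (vert_None v); apply vert_None | apply IH].
Qed.

Lemma EQ_move p q : elem_move X dd ss p q -> EQ p q.
Proof. intro H. apply rst_step. split; [apply path_all|split; [apply path_all|exact H]]. Qed.

Lemma move_cong a b p q : elem_move X dd ss p q -> elem_move X dd ss (a ++ p ++ b) (a ++ q ++ b).
Proof.
  intro H; destruct H.
  - replace (a ++ (p ++ (e, b0) :: (e, negb b0) :: q) ++ b)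
      with ((a ++ p) ++ (e, b0) :: (e, negb b0) :: (q ++ b)) by (now rewrite <- !app_assoc).
    replace (a ++ (p ++ q) ++ b) with ((a ++ p) ++ (q ++ b)) by (now rewrite <- !app_assoc).
    apply em_cancel.
  - replace (a ++ (p ++ (ss 0 0 w, b0) :: q) ++ b)
      with ((a ++ p) ++ (ss 0 0 w, b0) :: (q ++ b)) by (now rewrite <- !app_assoc).
    replace (a ++ (p ++ q) ++ b) with ((a ++ p) ++ (q ++ b)) by (now rewrite <- !app_assoc).
    apply em_degen.
  - replace (a ++ (p ++ (dd 1 2 sg, true) :: (dd 1 0 sg, true) :: q) ++ b)
      with ((a ++ p) ++ (dd 1 2 sg, true) :: (dd 1 0 sg, true) :: (q ++ b)) by (now rewrite <- !app_assoc).
    replace (a ++ (p ++ (dd 1 1 sg, true) :: q) ++ b)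
      with ((a ++ p) ++ (dd 1 1 sg, true) :: (q ++ b)) by (now rewrite <- !app_assoc).
    apply em_tri.
Qed.

Lemma EQ_refl p : EQ p p.
Proof. apply rst_refl. Qed.
Lemma EQ_sym p q : EQ p q -> EQ q p.
Proof. apply rst_sym. Qed.
Lemma EQ_trans p q r : EQ p q -> EQ q r -> EQ p r.
Proof. apply rst_trans. Qed.

Lemma EQ_cong a p q b : EQ p q -> EQ (a ++ p ++ b) (a ++ q ++ b).
Proof.
  intro H; induction H.
  - destruct H as [_ [_ H]]. apply EQ_move, move_cong, H.
  - apply EQ_refl.
  - apply EQ_sym; auto.
  - eapply EQ_trans; eauto.
Qed.

Definition linv (p : list (step X)) : list (step X) :=
  rev (map (fun e => (fst e, negb (snd e))) p).

Lemma EQ_inv_r p : EQ (p ++ linv p) [].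
Proof.
  induction p as [|[x b] p IH].
  - apply EQ_refl.
  - unfold linv; simpl. fold (linv p).
    apply EQ_trans with ([(x, b)] ++ [] ++ [(x, negb b)]).
    + rewrite app_assoc. exact (EQ_cong [(x, b)] (p ++ linv p) [] [(x, negb b)] IH).
    + apply EQ_move. exact (em_cancel X dd ss x b [] []).
Qed.

Lemma EQ_inv_l p : EQ (linv p ++ p) [].
Proof.
  induction p as [|[x b] p IH].
  - apply EQ_refl.
  - unfold linv; simpl. fold (linv p).
    apply EQ_trans with (linv p ++ [] ++ p); [|exact IH].
    rewrite <- app_assoc.
    pose proof (em_cancel X dd ss x (negb b) [] []) as H.
    rewrite negb_involutive in H.
    exact (EQ_cong (linv p) [(x, negb b); (x, b)] [] p (EQ_move _ _ H)).
Qed.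

Definition Q : Grp := QG (step X) EQ EQ_refl EQ_sym EQ_trans EQ_cong linv EQ_inv_r EQ_inv_l.
Definition cls (p : list (step X)) : Q := qc (step X) EQ p.

Lemma cls_mul p q : @gmul Q (cls p) (cls q) = cls (p ++ q).
Proof. apply QG_mul. Qed.
Lemma cls_eq p q : cls p = cls q <-> EQ p q.
Proof. apply qc_eq; [apply EQ_refl | apply EQ_sym | apply EQ_trans]. Qed.
Lemma cls_one : cls [] = @gone Q.
Proof. reflexivity. Qed.

Definition ev (e : X 1) : L :=
  match e with
  | None => gone
  | Some (existT _ c (_, exist _ x _)) => iota c (fst x)
  end.
Definition val (e : step X) : L := if snd e then ev (fst e) else ginv (ev (fst e)).
Fixpoint phi (p : list (step X)) : L :=
  match p with [] => gone | e :: q => gmul (val e) (phi q) end.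

Lemma phi_app p q : phi (p ++ q) = gmul (phi p) (phi q).
Proof.
  induction p as [|e p IH]; simpl.
  - rewrite gmul_1l; reflexivity.
  - rewrite IH, gmul_assoc; reflexivity.
Qed.

Lemma hmk_some n c ch x (nx : x <> bone n) :
  hmk C F n c ch x = Some (existT _ c (ch, exist _ x nx)).
Proof.
  unfold hmk. destruct (excluded_middle_informative _) as [e|n']; [contradiction|].
  rewrite (proof_irrelevance _ n' nx). reflexivity.
Qed.

Lemma hmk_one n c ch : hmk C F n c ch (bone n) = None.
Proof.
  unfold hmk. destruct (excluded_middle_informative _) as [e|n']; [reflexivity|].
  exfalso; apply n'; reflexivity.
Qed.

Lemma cocone : is_cocone F iota.
Proof. exact (proj1 Hcol). Qed.

Lemma ev_hmk c ch x : ev (hmk C F 1 c ch (x, tt)) = iota c x.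
Proof.
  unfold hmk. destruct (excluded_middle_informative _) as [e|n']; [|reflexivity].
  injection e as ->. simpl. symmetry; apply hom_one, (proj1 cocone).
Qed.

Lemma tri_ev sg : gmul (ev (dd 1 2 sg)) (ev (dd 1 0 sg)) = ev (dd 1 1 sg).
Proof.
  destruct sg as [[c [[c1 [f [c2 [g []]]]] [[x1 [x2 []]] nx]]]|].
  - simpl. rewrite !ev_hmk. rewrite (proj2 cocone). symmetry; apply (proj1 cocone).
  - simpl. apply gmul_1l.
Qed.

Lemma move_phi p q : elem_move X dd ss p q -> phi p = phi q.
Proof.
  intro H; destruct H; rewrite !phi_app; simpl; f_equal.
  - rewrite gmul_assoc.
    assert (E : gmul (val (e, b)) (val (e, negb b)) = gone)
      by (destruct b; simpl; [apply gmul_Vr | apply gmul_Vl]).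
    simpl in E. rewrite E, gmul_1l; reflexivity.
  - rewrite (vert_None w); simpl. destruct b; simpl; [apply gmul_1l|]. unfold val; simpl. rewrite ginv_one; apply gmul_1l.
  - unfold val; simpl. rewrite gmul_assoc, tri_ev; reflexivity.
Qed.

Lemma EQ_phi p q : EQ p q -> phi p = phi q.
Proof.
  intro H; induction H.
  - destruct H as [_ [_ H]]; apply move_phi, H.
  - reflexivity.
  - auto.
  - congruence.
Qed.

Definition E (c c' : Ob C) (f : Hom C c c') (x : fobj F c) : X 1 :=
  hmk C F 1 c (existT (fun c' => (Hom C c c' * chain c' 0)%type) c' (f, tt)) (x, tt).

Lemma E_one c c' f : E c c' f gone = None.
Proof. exact (hmk_one 1 c _). Qed.

Lemma tri c c1 c2 (f : Hom C c c1) (g : Hom C c1 c2) x1 x2 :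
  EQ [(E c c1 f x1, true); (E c1 c2 g (fmap F f x2), true)]
     [(E c c2 (comp g f) (gmul x1 x2), true)].
Proof.
  destruct (excluded_middle_informative ((x1, (x2, tt)) = @bone (fobj F c) 2)) as [e|n].
  - simpl in e. injection e as -> ->.
    rewrite (hom_one _ (fmap_hom C F c c1 f)), gmul_1l, !E_one.
    apply EQ_move. exact (em_degen X dd ss None true [] [(None, true)]).
  - pose (ch2 := (existT _ c1 (f, existT _ c2 (g, tt)) : chain c 2)).
    pose (sg := (Some (existT _ c (ch2, exist _ (x1, (x2, tt)) n)) : X 2)).
    apply EQ_move. exact (em_tri X dd ss sg [] []).
Qed.

Definition kappa (c : Ob C) (x : fobj F c) : Q := cls [(E c c (idm c) x, true)].

Lemma kappa_E a b (f : Hom C a b) x : EQ [(E a a (idm a) x, true)] [(E a b f x, true)].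
Proof.
  pose proof (tri a a b (idm a) f x gone) as H.
  rewrite fmap_id, comp_id_r, gmul_1r, E_one in H.
  apply EQ_trans with [(E a a (idm a) x, true); (None, true)]; [|exact H].
  apply EQ_sym, EQ_move. exact (em_degen X dd ss None true [(E a a (idm a) x, true)] []).
Qed.

Lemma kappa_cocone : is_cocone F kappa.
Proof.
  split.
  - intros c x y. unfold kappa. rewrite cls_mul. apply cls_eq, EQ_sym.
    pose proof (tri c c c (idm c) (idm c) x y) as H.
    rewrite fmap_id, comp_id_l in H. exact H.
  - intros a b f x. unfold kappa. apply cls_eq.
    apply EQ_trans with [(E a b f x, true)]; [|apply EQ_sym, kappa_E].
    pose proof (tri a b b f (idm b) gone x) as H.
    rewrite comp_id_l, gmul_1l, E_one in H.
    apply EQ_trans with [(None, true); (E b b (idm b) (fmap F f x), true)]; [|exact H].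
    apply EQ_sym, EQ_move. exact (em_degen X dd ss None true [] [(E b b (idm b) (fmap F f x), true)]).
Qed.

Lemma main_parts :
  exists phi0, pi1_iso X dd ss (hbase C F) L phi0.
Proof.
  destruct ((proj2 Hcol) Q kappa kappa_cocone) as [u [uhom [uk _]]].
  assert (Hcls : forall p, cls p = u (phi p)).
  { assert (Hpos : forall e, cls [(e, true)] = u (ev e)).
    { intros [[c [[c' [f []]] [[x []] nx]]]|].
      - simpl. rewrite uk. unfold kappa. apply cls_eq.
        rewrite <- (hmk_some 1 c _ _ nx). apply EQ_sym, (kappa_E c c' f x).
      - simpl. rewrite (hom_one u uhom). apply cls_eq, EQ_move.
        exact (em_degen X dd ss None true [] []). }
    induction p as [|[e b] p IH].
    - symmetry; apply (hom_one u uhom).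
    - change ((e, b) :: p) with ([(e, b)] ++ p). rewrite <- cls_mul, IH. simpl phi.
      rewrite uhom. assert (Hv : cls [(e, b)] = u (val (e, b))); [|rewrite Hv; reflexivity].
      destruct b; unfold val; simpl; [apply Hpos|].
      rewrite (hom_inv u uhom), <- Hpos. apply (inv_unique Q).
      rewrite cls_mul. apply cls_eq, EQ_move. exact (em_cancel X dd ss e true [] []). }
  exists phi. split; [|split].
  - intros p q _ _. split; [apply EQ_phi|].
    intro H. apply cls_eq. rewrite !Hcls, H. reflexivity.
  - intros p q _ _. apply phi_app.
  - intro y.
    pose (phibar := fun a : Q => phi (rep _ EQ a)).
    assert (Hrep : forall p, phi (rep _ EQ (cls p)) = phi p).
    { intro p. apply EQ_phi. apply (qc_rep _ EQ EQ_refl EQ_sym EQ_trans). }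
    assert (Hph : is_hom phibar).
    { intros a b. destruct (qind _ EQ a) as [p ->], (qind _ EQ b) as [q ->].
      unfold phibar. change (qc _ EQ p) with (cls p). change (qc _ EQ q) with (cls q).
      rewrite cls_mul, !Hrep. apply phi_app. }
    destruct ((proj2 Hcol) L iota cocone) as [u0 [_ [_ uniq]]].
    assert (E1 : phibar (u y) = u0 y).
    { apply (uniq (fun y => phibar (u y))).
      - intros a b. rewrite uhom; apply Hph.
      - intros c x. rewrite uk. unfold phibar, kappa. rewrite Hrep. simpl.
        unfold val, E; simpl. rewrite gmul_1r. apply ev_hmk. }
    assert (E2 : y = u0 y).
    { apply (uniq (fun y => y)); [intros a b; reflexivity | reflexivity]. }
    exists (rep _ EQ (u y)). split; [apply path_all|]. unfold phibar in E1. congruence.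
Qed.
End Main.

Theorem mainTheorem8 (C : Cat) (F : GrpFunctor C)
  (L : Grp) (iota : forall c, fobj F c -> L) :
  is_colimit F iota ->
  (exists phi, pi1_iso (hsimp C F) (hface C F) (hdeg C F) (hbase C F) L phi) /\
  (simply_connected (hsimp C F) (hface C F) (hdeg C F) (hbase C F) <->
     forall y : L, y = gone).
Proof.
  intro Hcol.
  destruct (main_parts C F L iota Hcol) as [phi0 [H1 [H2 H3]]].
  assert (Hnil : phi0 [] = gone).
  { apply idem_one. rewrite <- H2 by apply path_all; reflexivity. }
  split; [exists phi0; split; [exact H1|split; [exact H2|exact H3]]|].
  split.
  - intros [_ Hsc] y. destruct (H3 y) as [p [Hp <-]].
    rewrite <- Hnil. apply (H1 p []); [exact Hp|apply path_all|apply Hsc, Hp].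
  - intros Hall. split.
    + intro w. exists []. apply path_all.
    + intros p Hp. apply (H1 p []); [exact Hp|apply path_all|].
      rewrite Hnil; apply Hall.
Qed.
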